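(* The task of estimating (to $\ell_\infty$-precision $\epsilon$, with high probability) the error rates $\pi$ of an $n$-qubit Pauli channel with SPAM governed by retention rates $r_{\mathrm{prep}}, r_{\mathrm{meas}}$ reduces, with a factor $O(n\log(n/\epsilon))$ loss of efficiency, to the task of Individual Recovery of $\mathcal{D}(\mathsf{0}^n)$ under the noise channel $\mathrm{BSC}_{\delta/2}\circ \mathrm{Z}_{1/3}$, where $\delta=1-r_{\mathrm{prep}}\cdot r_{\mathrm{meas}}$.
   Context: An $n$-qubit Pauli channel with error rates $\pi$ (a probability distribution on $\{0,1,2,3\}^n$) is $\rho\mapsto\sum_C\pi(C)\sigma_C\rho\sigma_C^\dagger$, where $\sigma_C=\bigotimes_j\sigma_{C_j}$ with $\sigma_0=I,\sigma_1=\sigma_x,\sigma_2=\sigma_y,\sigma_3=\sigma_z$. SPAM model: an intended prepared single-qubit state $|a\rangle$ is actually $r_{\mathrm{prep}}|a\rangle\langle a|+(1-r_{\mathrm{prep}})\frac12 I$; a single-qubit state $\rho$ measured in an intended basis gives outcomes as if $r_{\mathrm{meas}}\rho+(1-r_{\mathrm{meas}})\frac12 I$ were measured; only single-qubit (unentangled) preparations and measurements are used, and $r_{\mathrm{prep}},r_{\mathrm{meas}}$ are known. Classical channels act independently on each bit of a string. $\mathrm{BSC}_p:\{\mathsf0,\mathsf1\}\to\{\mathsf0,\mathsf1\}$ flips the bit with probability $p$. $\mathrm{Z}_p:\{\mathsf0,\mathsf1\}\to\{\mathsf0,\mathsf1\}$ always maps $\mathsf0\mapsto\mathsf0$ and maps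 $\mathsf1\mapsto\mathsf0$ with probability $p$ (else keeps $\mathsf1$). Individual Recovery of $\mathcal{D}(\mathsf0^n)$ under a channel $\Lambda$: $\mathcal{D}$ is an unknown distribution on $\{\mathsf0,\mathsf1\}^n$, the learner receives independent samples $\Lambda(\mathbf{x})$ with $\mathbf{x}\sim\mathcal{D}$, and must estimate $\mathcal{D}(\mathsf0^n)$ to additive precision $\epsilon$ with high probability. *)

(* Defs.v *)
From HB Require Import structures.
From mathcomp Require Import all_boot all_order all_algebra.
From mathcomp Require Import all_classical all_reals all_analysis.
Set Implicit Arguments. Unset Strict Implicit. Unset Printing Implicit Defensive.
Import Order.TTheory GRing.Theory Num.Theory.
Local Open Scope ring_scope.

Definition bits (n : nat) := {ffun 'I_n -> bool}.
(* Pauli strings {0,1,2,3}^n : 0 = I, 1 = X, 2 = Y, 3 = Z *)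
Definition pauli (n : nat) := {ffun 'I_n -> 'I_4}.
Definition zero_bits (n : nat) : bits n := [ffun => false].

Section Defs.
Context {R : realType}.

Definition is_dist (T : finType) (p : {ffun T -> R}) : Prop :=
  (forall x, 0 <= p x) /\ \sum_x p x = 1.

(* single-bit classical channels, as transition kernels K x y = P(out = y | in = x) *)
Definition bsc (p : R) (x y : bool) : R := if x == y then 1 - p else p.
Definition zch (p : R) (x y : bool) : R :=
  if x then (if y then 1 - p else p) else (if y then 0 else 1).
Definition comp_bit (K2 K1 : bool -> bool -> R) (x y : bool) : R :=
  \sum_(z : bool) K1 x z * K2 z y.
Definition noise_IR (delta : R) : bool -> bool -> R :=
  comp_bit (bsc (delta / 2)) (zch (1 / 3)).
Definition chan_out (n : nat) (K : bool -> bool -> R) (D : {ffun bits n -> R})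
  (y : bits n) : R :=
  \sum_(x : bits n) D x * \prod_(i < n) K (x i) (y i).

(* A (randomized) Individual Recovery algorithm for D(0^n) using m samples:
   a random seed s ~ w on 'I_k and an estimator est s applied to the m samples. *)
Definition IR_alg_ok (n : nat) (delta eps : R) (m k : nat) (w : {ffun 'I_k -> R})
  (est : 'I_k -> {ffun 'I_m -> bits n} -> R) : Prop :=
  is_dist w /\
  forall D : {ffun bits n -> R}, is_dist D ->
    2 / 3 <= \sum_(s < k) w s *
      \sum_(S : {ffun 'I_m -> bits n} | `|est s S - D (zero_bits n)| <= eps)
        \prod_(t < m) chan_out (noise_IR delta) D (S t).

(* single-qubit states / measurement axes as Bloch vectors *)
Definition bloch := {ffun 'I_3 -> R}.
Definition unit_bloch (v : bloch) : Prop := \sum_(i < 3) v i ^+ 2 = 1.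
Definition bdot (u v : bloch) : R := \sum_(i < 3) u i * v i.
(* Bloch vector of sigma_a rho sigma_a, for rho with Bloch vector v *)
Definition pauli_conj (a : 'I_4) (v : bloch) : bloch :=
  [ffun i : 'I_3 => if (val a == 0%N) || (val a == (val i).+1) then v i else - v i].
(* Probability of outcome o (false = "+u", true = "-u") when the intended state
   with Bloch vector v is prepared (retention rp), the Pauli sigma_a acts, and
   the qubit is measured in the basis with axis u (retention rm). *)
Definition qubit_prob (rp rm : R) (v u : bloch) (a : 'I_4) (o : bool) : R :=
  (1 + (if o then -1 else 1) * (rm * (bdot u (pauli_conj a (rp *: v))))) / 2.
Definition shot_prob (n : nat) (rp rm : R) (pi : {ffun pauli n -> R})
  (v u : 'I_n -> bloch) (o : bits n) : R :=
  \sum_(C : pauli n) pi C * \prod_(j < n) qubit_prob rp rm (v j) (u j) (C j) (o j).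

(* A (randomized) Pauli error-rate estimation protocol with N channel uses, using
   single-qubit preparations/measurements: seed s ~ w, shot t prepares qubit j in
   the pure state with Bloch vector v s t j and measures along u s t j; the
   estimate g s O of pi must be eps-close in l_infty with probability >= 2/3. *)
Definition pauli_alg_ok (n : nat) (rp rm eps : R) (N k : nat) (w : {ffun 'I_k -> R})
  (v u : 'I_k -> 'I_N -> 'I_n -> bloch)
  (g : 'I_k -> {ffun 'I_N -> bits n} -> {ffun pauli n -> R}) : Prop :=
  is_dist w /\
  (forall s t j, unit_bloch (v s t j) /\ unit_bloch (u s t j)) /\
  forall pi : {ffun pauli n -> R}, is_dist pi ->
    2 / 3 <= \sum_(s < k) w s *
      \sum_(O : {ffun 'I_N -> bits n} | [forall C : pauli n, `|g s O C - pi C| <= eps])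
        \prod_(t < N) shot_prob rp rm pi (v s t) (u s t) (O t).

End Defs.

(* Main.v *)
Require Import Defs.
From HB Require Import structures.
From mathcomp Require Import all_boot all_order all_algebra.
From mathcomp Require Import all_classical all_reals all_analysis.
From mathcomp Require Import ring lra zify.
Import Order.TTheory GRing.Theory Num.Theory.
Local Open Scope ring_scope.
Set Implicit Arguments. Unset Strict Implicit. Unset Printing Implicit Defensive.

Section S.
Variable R : realType.

Definition E (b : 'I_3) : @bloch R := [ffun i => if i == b then 1 else 0].
Definition cnd (a : 'I_4) (b : 'I_3) : bool := (val a == 0%N) || (val a == (val b).+1).
Definition epsv (a : 'I_4) (b : 'I_3) : R := if cnd a b then 1 else -1.
Definition flip (c : 'I_4) (b : 'I_3) : bool := ~~ cnd c b.

Lemma bdotE (b : 'I_3) (a : 'I_4) (rp : R) :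
  bdot (E b) (pauli_conj a (rp *: E b)) = rp * epsv a b.
Proof.
rewrite /bdot (bigD1 b) //= big1 ?addr0 => [|i /negbTE ib]; last first.
  by rewrite !ffunE ib mul0r.
rewrite !ffunE !eqxx /epsv /cnd mul1r.
case: ifP => _; [reflexivity | rewrite mulrN1; congr (- _); exact: mulr1].
Qed.

Lemma qpE (rp rm : R) b a o : qubit_prob rp rm (E b) (E b) a o =
  (1 + (if o then -1 else 1) * (rm * (rp * epsv a b))) / 2.
Proof. by rewrite /qubit_prob bdotE. Qed.

Lemma qubitL (rp rm : R) (a c : 'I_4) (o : bool) :
  \sum_(b < 3) (1/3) * qubit_prob rp rm (E b) (E b) a (o (+) flip c b)
  = noise_IR (1 - rp * rm) (val a != val c) o.
Proof.
under eq_bigr do rewrite qpE.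
rewrite /noise_IR /comp_bit big_bool /= /zch /bsc.
rewrite !big_ord_recr big_ord0 /= /epsv /flip /cnd /=.
case: a => [[|[|[|[|a]]]] Ha] //; case: c => [[|[|[|[|c]]]] Hc] //; case: o => /=; field; done.
Qed.


Definition shift1 n (C : pauli n) (be : {ffun 'I_n -> 'I_3}) (y : bits n) : bits n :=
  [ffun q => y q (+) flip (C q) (be q)].
Definition supp n (C C' : pauli n) : bits n := [ffun q => val (C' q) != val (C q)].
Definition DC n (pi : {ffun pauli n -> R}) (C : pauli n) : {ffun bits n -> R} :=
  [ffun x => \sum_(C' : pauli n) pi C' * (x == supp C C')%:R].
Definition Ev n (be : {ffun 'I_n -> 'I_3}) : 'I_n -> bloch := fun q => E (be q).

Lemma shotL n (rp rm : R) pi (C : pauli n) y :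
  \sum_(be : {ffun 'I_n -> 'I_3}) (\prod_(q < n) (1/3:R)) *
     shot_prob rp rm pi (Ev be) (Ev be) (shift1 C be y)
  = chan_out (noise_IR (1 - rp*rm)) (DC pi C) y.
Proof.
rewrite /shot_prob /chan_out.
under eq_bigr do rewrite mulr_sumr.
rewrite exchange_big /=.
transitivity (\sum_(C' : pauli n) pi C' *
   \prod_(q < n) noise_IR (1 - rp * rm) (supp C C' q) (y q)); last first.
  under [RHS]eq_bigr do rewrite ffunE mulr_suml.
  rewrite [RHS]exchange_big /=; apply: eq_bigr => C' _.
  rewrite (bigD1 (supp C C')) //= eqxx mulr1 [\sum_(i | i != _) _]big1 ?addr0 // => x /negbTE ->.
  by rewrite mulr0 mul0r.
apply: eq_bigr => C' _.
under eq_bigr => be _ do rewrite mulrCA -big_split /=.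
rewrite -mulr_sumr; congr (_ * _).
under eq_bigr do under eq_bigr do rewrite ffunE.
rewrite -(bigA_distr_bigA (fun q b => 1/3 * qubit_prob rp rm (E b) (E b) (C' q) (y q (+) flip (C q) b))).
apply: eq_bigr => q _; rewrite qubitL ffunE //.
Qed.

Lemma noise_sum (d : R) (x : bool) : \sum_(b : bool) noise_IR d x b = 1.
Proof. rewrite big_bool /noise_IR /comp_bit !big_bool /zch /bsc; case: x => /=; field; done. Qed.

Lemma chan_sum n (D : {ffun bits n -> R}) d : is_dist D ->
  \sum_(y : bits n) chan_out (noise_IR d) D y = 1.
Proof.
case=> _ D1; rewrite /chan_out exchange_big /= -[RHS]D1; apply: eq_bigr => x _.
rewrite -mulr_sumr -(bigA_distr_bigA (fun q b => noise_IR d (x q) b)).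
by rewrite big1 ?mulr1 // => q _; rewrite noise_sum.
Qed.

Lemma DC_dist n (pi : {ffun pauli n -> R}) C : is_dist pi -> is_dist (DC pi C).
Proof.
case=> p0 p1; split.
  move=> x; rewrite ffunE; apply: sumr_ge0 => C' _; apply: mulr_ge0 => //; exact: ler0n.
under eq_bigr do rewrite ffunE.
rewrite exchange_big /= -[RHS]p1; apply: eq_bigr => C' _.
rewrite (bigD1 (supp C C')) //= eqxx mulr1 big1 ?addr0 // => x /negbTE ->.
by rewrite mulr0.
Qed.

Lemma DC0 n (pi : {ffun pauli n -> R}) C : DC pi C (zero_bits n) = pi C.
Proof.
rewrite ffunE (bigD1 C) //= big1 ?addr0.
  suff -> : zero_bits n == supp C C by rewrite mulr1.
  by apply/eqP/ffunP => q; rewrite !ffunE eqxx.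
move=> C' /negbTE nC; suff -> : zero_bits n == supp C C' = false by rewrite mulr0.
apply/negbTE/negP => /eqP e; move/negbT: nC; rewrite eq_sym => /negP; apply.
apply/eqP/ffunP => q; move/ffunP: e => /(_ q); rewrite !ffunE => /esym/negbFE/eqP.
by move/val_inj.
Qed.


Definition shiftm n m (C : pauli n) (b : {ffun 'I_m -> {ffun 'I_n -> 'I_3}})
  (o : {ffun 'I_m -> bits n}) : {ffun 'I_m -> bits n} := [ffun j => shift1 C (b j) (o j)].

Lemma shiftmK n m (C : pauli n) (b : {ffun 'I_m -> {ffun 'I_n -> 'I_3}}) :
  involutive (shiftm C b).
Proof. by move=> o; apply/ffunP => j; apply/ffunP => q; rewrite !ffunE addbK. Qed.

Lemma simL n m (rp rm : R) pi (C : pauli n) (H : {ffun 'I_m -> bits n} -> R) :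
 \sum_(b : {ffun 'I_m -> {ffun 'I_n -> 'I_3}}) \sum_(o : {ffun 'I_m -> bits n})
   (\prod_(j < m) ((\prod_(q < n) (1/3:R)) * shot_prob rp rm pi (Ev (b j)) (Ev (b j)) (o j)))
     * H (shiftm C b o)
 = \sum_(S : {ffun 'I_m -> bits n})
     (\prod_(j < m) chan_out (noise_IR (1 - rp*rm)) (DC pi C) (S j)) * H S.
Proof.
under eq_bigr => b _ do rewrite (reindex_inj (can_inj (shiftmK C b))) /=.
under eq_bigr => b _ do under eq_bigr => S _ do rewrite shiftmK.
rewrite exchange_big /=; apply: eq_bigr => S _; rewrite -mulr_suml; congr (_ * _).
transitivity (\sum_(b : {ffun 'I_m -> {ffun 'I_n -> 'I_3}}) \prod_(j < m)
   ((\prod_(q < n) (1/3:R)) * shot_prob rp rm pi (Ev (b j)) (Ev (b j)) (shift1 C (b j) (S j)))).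
  by apply: eq_bigr => b _; apply: eq_bigr => j _; rewrite /shiftm ffunE.
rewrite -(bigA_distr_bigA (fun j be => (\prod_(q < n) (1/3:R)) *
   shot_prob rp rm pi (Ev be) (Ev be) (shift1 C be (S j)))).
apply: eq_bigr => j _; exact: shotL.
Qed.

Lemma sum_bij (T1 T2 : finType) (f : T1 -> T2) (g : T2 -> T1) (F : T2 -> R) :
  cancel f g -> cancel g f -> \sum_(x : T2) F x = \sum_(y : T1) F (f y).
Proof. by move=> fg gf; rewrite (reindex f) //; apply: onW_bij; exists g. Qed.

Lemma prod_bij (T1 T2 : finType) (f : T1 -> T2) (g : T2 -> T1) (F : T2 -> R) :
  cancel f g -> cancel g f -> \prod_(x : T2) F x = \prod_(y : T1) F (f y).
Proof. by move=> fg gf; rewrite (reindex f) //; apply: onW_bij; exists g. Qed.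

Lemma third_sum : \sum_(b < 3) (1/3 : R) = 1.
Proof. by rewrite sumr_const card_ord -mulr_natr; field. Qed.

Lemma Ev_mass n : \sum_(be : {ffun 'I_n -> 'I_3}) \prod_(q < n) (1/3 : R) = 1.
Proof.
rewrite -(bigA_distr_bigA (fun (q : 'I_n) (b : 'I_3) => (1/3 : R))).
by rewrite big1 // => q _; rewrite third_sum.
Qed.

Section Block.
Variables (n m k r : nat).
Definition BT := ('I_k * {ffun 'I_m -> {ffun 'I_n -> 'I_3}})%type.
Definition ST := {ffun 'I_r -> BT}.
Definition Nb := #|{: 'I_r * 'I_m}|.
Definition blockO (O : {ffun 'I_Nb -> bits n}) : {ffun 'I_r -> {ffun 'I_m -> bits n}} :=
  [ffun i => [ffun j => O (enum_rank (i, j))]].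
Definition unblock (O : {ffun 'I_r -> {ffun 'I_m -> bits n}}) : {ffun 'I_Nb -> bits n} :=
  [ffun t => O (enum_val t).1 (enum_val t).2].

Lemma blockK : cancel blockO unblock.
Proof. by move=> O; apply/ffunP => t; rewrite !ffunE -surjective_pairing enum_valK. Qed.
Lemma unblockK : cancel unblock blockO.
Proof. by move=> O; apply/ffunP => i; apply/ffunP => j; rewrite !ffunE enum_rankK. Qed.

Lemma factorE (Phi : BT -> {ffun 'I_m -> bits n} -> R) :
  \sum_(s < #|{: ST}|) \sum_(O : {ffun 'I_Nb -> bits n})
     \prod_(i < r) Phi (enum_val s i) (blockO O i)
  = \prod_(i < r) \sum_(xi : BT) \sum_(o : {ffun 'I_m -> bits n}) Phi xi o.
Proof.
rewrite (sum_bij _ (@enum_rankK ST) (@enum_valK ST)) /=.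
under eq_bigr => x _ do rewrite enum_rankK (sum_bij _ unblockK blockK) /=.
under eq_bigr => x _ do under eq_bigr => O _ do rewrite unblockK.
under eq_bigr => x _ do rewrite -(bigA_distr_bigA (fun i o => Phi (x i) o)).
by rewrite -(bigA_distr_bigA (fun i xi => \sum_(o : {ffun 'I_m -> bits n}) Phi xi o)).
Qed.


Variables (w : {ffun 'I_k -> R}) (rp rm : R) (pi : {ffun pauli n -> R}).
Definition dec (s : 'I_#|{: ST}|) : ST := enum_val s.
Definition wP : {ffun 'I_#|{: ST}| -> R} :=
  [ffun s => \prod_(i < r) (w (dec s i).1 * \prod_(j < m) \prod_(q < n) (1/3:R))].
Definition vv (s : 'I_#|{: ST}|) (t : 'I_Nb) : 'I_n -> bloch :=
  Ev ((dec s (enum_val t).1).2 (enum_val t).2).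
Definition BW (xi : BT) (o : {ffun 'I_m -> bits n}) : R :=
  w xi.1 * \prod_(j < m) ((\prod_(q < n) (1/3:R)) *
     shot_prob rp rm pi (Ev (xi.2 j)) (Ev (xi.2 j)) (o j)).

Lemma PE (s : 'I_#|{: ST}|) (O : {ffun 'I_Nb -> bits n}) : wP s * \prod_(t < Nb) shot_prob rp rm pi (vv s t) (vv s t) (O t)
  = \prod_(i < r) BW (dec s i) (blockO O i).
Proof.
rewrite ffunE /BW.
under [RHS]eq_bigr => i _ do rewrite big_split /= mulrA.
rewrite [RHS]big_split /=; congr (_ * _).
rewrite pair_bigA /= (prod_bij _ (@enum_rankK ('I_r * 'I_m)%type) (@enum_valK _)) /=.
by apply: eq_bigr => -[i j] _; rewrite /vv enum_rankK /= !ffunE.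
Qed.

Lemma wP_dist : is_dist w -> is_dist wP.
Proof.
case=> w0 w1; split.
  move=> s; rewrite ffunE; apply: prodr_ge0 => i _; apply: mulr_ge0 => //.
  by apply: prodr_ge0 => j _; apply: prodr_ge0 => q _; rewrite divr_ge0 ?ler0n.
rewrite (sum_bij _ (@enum_rankK ST) (@enum_valK ST)) /=.
under eq_bigr do rewrite ffunE /dec enum_rankK.
rewrite -(bigA_distr_bigA (fun (i : 'I_r) (xi : BT) =>
   w xi.1 * \prod_(j < m) \prod_(q < n) (1/3:R))).
rewrite big1 // => i _.
rewrite -(pair_bigA _ (fun a (b : {ffun 'I_m -> {ffun 'I_n -> 'I_3}}) =>
   w a * \prod_(j < m) \prod_(q < n) (1/3:R))) /=.
under eq_bigr do rewrite -mulr_sumr.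
rewrite -mulr_suml w1 mul1r.
rewrite -(bigA_distr_bigA (fun (j : 'I_m) (be : {ffun 'I_n -> 'I_3}) => \prod_(q < n) (1/3:R))).
by rewrite big1 // => j _; rewrite Ev_mass.
Qed.

End Block.

Definition sel r (f : 'I_r -> R) : R :=
  \big[Num.max/0]_(j < r | (r < 2 * #|[set i | (f j <= f i)%R]|)%N) f j.

Lemma sel_ok r (f : 'I_r -> R) t eps : 0 <= t + eps ->
  (r < 2 * #|[set i | (`|f i - t| <= eps)%R]|)%N -> `|sel f - t| <= eps.
Proof.
move=> h0 hg.
set G := [set i | `|f i - t| <= eps] in hg.
have hC := cardsC G; rewrite card_ord in hC.
have up : sel f <= t + eps.
  rewrite /sel; apply: (big_rec (fun y => y <= t + eps)) => // j y sj hy.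
  rewrite ge_max hy andbT leNgt; apply/negP => hj.
  have sub : [set i | f j <= f i] \subset ~: G.
    apply/fintype.subsetP => i; rewrite !inE => hi; rewrite -ltNge.
    rewrite (lt_le_trans _ (ler_norm _)) //; lra.
  have := subset_leq_card sub; lia.
have lo : t - eps <= sel f.
  have : (0 < #|G|)%N by lia.
  rewrite card_gt0 => /set0Pn [j0 Gj0].
  case: (@arg_minP _ _ _ j0 (fun i => i \in G) f Gj0) => j Gj minj.
  have selj : (r < 2 * #|[set i | (f j <= f i)%R]|)%N.
    have : G \subset [set i | f j <= f i] by apply/fintype.subsetP => i Gi; rewrite inE minj.
    move/subset_leq_card; lia.
  rewrite /sel (bigD1 j) //= le_max; apply/orP; left.
  move: Gj; rewrite inE ler_norml => /andP [] ; lra.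
by rewrite ler_norml; apply/andP; split; lra.
Qed.

Lemma qp_ge0 (rp rm : R) b a o : 0 <= rp <= 1 -> 0 <= rm <= 1 ->
  0 <= qubit_prob rp rm (E b) (E b) a o.
Proof.
move=> /andP [hp1 hp2] /andP [hm1 hm2].
have h1 : 0 <= rm * rp by apply: mulr_ge0.
have h2 : rm * rp <= 1 by apply: mulr_ile1.
rewrite qpE /epsv; case: (cnd a b); case: o; rewrite ?mulr1 ?mulrN1 ?mulrA; lra.
Qed.

Lemma E_unit b : unit_bloch (E b).
Proof.
rewrite /unit_bloch (bigD1 b) //= big1 ?addr0 => [|i /negbTE ib]; last by rewrite ffunE ib expr0n.
by rewrite ffunE eqxx expr1n.
Qed.

Lemma prod12 r (P : pred 'I_r) :
  \prod_(i < r) (if P i then 1 else 2 : R) = 2 ^+ #|[set i | ~~ P i]|.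
Proof.
rewrite (bigID P) /= big1 ?mul1r => [|i ->//].
rewrite -prodr_const; apply: eq_big => [i|i /negbTE ->//]; by rewrite inE.
Qed.

Lemma chanS n m (D : {ffun bits n -> R}) d : is_dist D ->
  \sum_(S : {ffun 'I_m -> bits n}) \prod_(j < m) chan_out (noise_IR d) D (S j) = 1.
Proof.
move=> hD; rewrite -(bigA_distr_bigA (fun (j : 'I_m) y => chan_out (noise_IR d) D y)).
by rewrite big1 // => j _; rewrite chan_sum.
Qed.

Section Main.
Variables (n m k q : nat) (w : {ffun 'I_k -> R}) (est : 'I_k -> {ffun 'I_m -> bits n} -> R)
  (rp rm eps : R) (pi : {ffun pauli n -> R}).
Local Notation r := (2 * q)%N.
Hypothesis wd : is_dist w.
Hypothesis IRok : forall D, is_dist D -> 2/3 <= \sum_(a < k) w a *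
      \sum_(S : {ffun 'I_m -> bits n} | `|est a S - D (zero_bits n)| <= eps)
        \prod_(t < m) chan_out (noise_IR (1 - rp * rm)) D (S t).
Hypothesis pid : is_dist pi.
Hypothesis eps0 : 0 < eps.
Hypothesis rpb : 0 <= rp <= 1.
Hypothesis rmb : 0 <= rm <= 1.

Definition ee (C : pauli n) (xi : BT n m k) (o : {ffun 'I_m -> bits n}) : R :=
  est xi.1 (shiftm C xi.2 o).
Definition gg (s : 'I_#|{: ST n m k r}|) (O : {ffun 'I_(Nb m r) -> bits n}) : {ffun pauli n -> R} :=
  [ffun C => sel (fun i : 'I_r => ee C (dec s i) (blockO O i))].
Definition Pr (s : 'I_#|{: ST n m k r}|) (O : {ffun 'I_(Nb m r) -> bits n}) : R :=
  wP n m r w s * \prod_(t < Nb m r) shot_prob rp rm pi (vv s t) (vv s t) (O t).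

Lemma blockL (C : pauli n) (H : 'I_k -> {ffun 'I_m -> bits n} -> R) :
  \sum_(xi : BT n m k) \sum_(o : {ffun 'I_m -> bits n}) BW w rp rm pi xi o * H xi.1 (shiftm C xi.2 o)
  = \sum_(a < k) w a * \sum_(S : {ffun 'I_m -> bits n})
       (\prod_(j < m) chan_out (noise_IR (1 - rp*rm)) (DC pi C) (S j)) * H a S.
Proof.
rewrite -(pair_bigA _ (fun a (b : {ffun 'I_m -> {ffun 'I_n -> 'I_3}}) =>
  \sum_(o : {ffun 'I_m -> bits n}) BW w rp rm pi (a, b) o * H a (shiftm C b o))) /=.
apply: eq_bigr => a _; rewrite -(simL _ _ _ C) mulr_sumr; apply: eq_bigr => b _.
rewrite mulr_sumr; apply: eq_bigr => o _; by rewrite /BW /= mulrA.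
Qed.

Lemma shot_ge0 (be : {ffun 'I_n -> 'I_3}) (o : bits n) : 0 <= shot_prob rp rm pi (Ev be) (Ev be) o.
Proof.
case: pid => p0 _; apply: sumr_ge0 => C _; apply: mulr_ge0 => //.
by apply: prodr_ge0 => j _; apply: qp_ge0.
Qed.

Lemma BW_ge0 (xi : BT n m k) (o : {ffun 'I_m -> bits n}) : 0 <= BW w rp rm pi xi o.
Proof.
case: wd => w0 _; apply: mulr_ge0 => //; apply: prodr_ge0 => j _; apply: mulr_ge0.
  by apply: prodr_ge0 => i _; rewrite divr_ge0 ?ler0n.
exact: shot_ge0.
Qed.

Lemma Pr_ge0 (s : 'I_#|{: ST n m k r}|) (O : {ffun 'I_(Nb m r) -> bits n}) : 0 <= Pr s O.
Proof. by rewrite /Pr PE; apply: prodr_ge0 => i _; apply: BW_ge0. Qed.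

Lemma Pr_factor (h : BT n m k -> {ffun 'I_m -> bits n} -> R) :
  \sum_(s < #|{: ST n m k r}|) \sum_(O : {ffun 'I_(Nb m r) -> bits n})
     Pr s O * \prod_(i < r) h (dec s i) (blockO O i)
  = \prod_(i < r) \sum_(xi : BT n m k) \sum_(o : {ffun 'I_m -> bits n}) BW w rp rm pi xi o * h xi o.
Proof.
rewrite -(factorE r (fun xi o => BW w rp rm pi xi o * h xi o)); apply: eq_bigr => s _; apply: eq_bigr => O _.
by rewrite /Pr PE -big_split.
Qed.

Lemma mass : \sum_(s < #|{: ST n m k r}|) \sum_(O : {ffun 'I_(Nb m r) -> bits n}) Pr s O = 1.
Proof.
have := Pr_factor (fun _ _ => 1).
under eq_bigr do under eq_bigr do rewrite big1 ?mulr1 //.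
move=> ->; rewrite big1 // => i _.
pose C0 : pauli n := [ffun => ord0].
have := blockL C0 (fun _ _ => 1).
under eq_bigr do under eq_bigr do rewrite mulr1.
move=> ->; case: wd => _ w1; rewrite -[RHS]w1; apply: eq_bigr => a _.
under eq_bigr do rewrite mulr1.
by rewrite chanS ?mulr1 //; apply: DC_dist.
Qed.

Definition hC (C : pauli n) (xi : BT n m k) (o : {ffun 'I_m -> bits n}) : R :=
  if `|ee C xi o - pi C| <= eps then 1 else 2.

Lemma block_bound C :
  \sum_(xi : BT n m k) \sum_(o : {ffun 'I_m -> bits n}) BW w rp rm pi xi o * hC C xi o <= 4/3.
Proof.
have := blockL C (fun a S => if `|est a S - pi C| <= eps then 1 else 2).
rewrite /hC /ee; move=> ->.
have DCd := DC_dist C pid.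
have := IRok DCd; rewrite DC0 => h.
have e : forall a, \sum_(S : {ffun 'I_m -> bits n})
       (\prod_(j < m) chan_out (noise_IR (1 - rp*rm)) (DC pi C) (S j)) *
       (if `|est a S - pi C| <= eps then 1 else 2)
   = 2 - \sum_(S : {ffun 'I_m -> bits n} | `|est a S - pi C| <= eps)
       \prod_(t < m) chan_out (noise_IR (1 - rp * rm)) (DC pi C) (S t).
  move=> a.
  have c1 := chanS m (1 - rp*rm) DCd.
  transitivity (2 * \sum_(S : {ffun 'I_m -> bits n})
       \prod_(j < m) chan_out (noise_IR (1 - rp*rm)) (DC pi C) (S j) -
     \sum_(S : {ffun 'I_m -> bits n}) (if `|est a S - pi C| <= eps then
       \prod_(t < m) chan_out (noise_IR (1 - rp * rm)) (DC pi C) (S t) else 0));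
    last by rewrite c1 mulr1 [in RHS]big_mkcond.
  rewrite mulr_sumr -sumrB.
  by apply: eq_bigr => S _; case: ifP => _; rewrite ?subr0; ring.
under eq_bigr do rewrite e mulrBr.
rewrite sumrB -mulr_suml; case: wd => _ ->; lra.
Qed.

Definition bad (C : pauli n) (s : 'I_#|{: ST n m k r}|) (O : {ffun 'I_(Nb m r) -> bits n}) : bool :=
  (2 * #|[set i | (`|ee C (dec s i) (blockO O i) - pi C| <= eps)%R]| <= r)%N.

Lemma bad_le (C : pauli n) (s : 'I_#|{: ST n m k r}|) (O : {ffun 'I_(Nb m r) -> bits n}) : (bad C s O)%:R <= (\prod_(i < r) hC C (dec s i) (blockO O i)) / 2 ^+ q.
Proof.
rewrite /hC /bad prod12.
set G := [set i | `|ee C (dec s i) (blockO O i) - pi C| <= eps].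
set B := [set i | ~~ (`|ee C (dec s i) (blockO O i) - pi C| <= eps)].
have eB : B = ~: G by apply/setP => i; rewrite !inE.
have hc := cardsC G; rewrite card_ord -eB in hc.
case: leqP => hb /=.
  rewrite ler_pdivlMr ?exprn_gt0 // mul1r; apply: ler_weXn2l; first lra.
  have h1 : (#|G| <= q)%N by lia.
  move: hc; set a := #|G|; set b := #|B|; move=> hc; lia.
by rewrite divr_ge0 // exprn_ge0.
Qed.

Lemma bad_sum C : \sum_(s < #|{: ST n m k r}|) \sum_(O : {ffun 'I_(Nb m r) -> bits n})
   Pr s O * (bad C s O)%:R <= (4/3) ^+ r / 2 ^+ q.
Proof.
apply: (le_trans (y := (\sum_(s < #|{: ST n m k r}|) \sum_(O : {ffun 'I_(Nb m r) -> bits n})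
   Pr s O * \prod_(i < r) hC C (dec s i) (blockO O i)) / 2 ^+ q)).
  rewrite mulr_suml; apply: ler_sum => s _; rewrite mulr_suml; apply: ler_sum => O _.
  rewrite -mulrA; by apply: ler_wpM2l; [apply: Pr_ge0 | apply: bad_le].
rewrite Pr_factor ler_pM2r ?invr_gt0 ?exprn_gt0 //.
apply: (le_trans (y := \prod_(i < r) (4/3 : R))); last by rewrite prodr_const card_ord.
apply: ler_prod => i _; rewrite block_bound andbT.
apply: sumr_ge0 => xi _; apply: sumr_ge0 => o _; apply: mulr_ge0; first exact: BW_ge0.
by rewrite /hC; case: ifP.
Qed.

Lemma main_bound : 1 - (4 ^ n)%:R * ((4/3) ^+ r / 2 ^+ q) <=
  \sum_(s < #|{: ST n m k r}|) wP n m r w s *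
      \sum_(O : {ffun 'I_(Nb m r) -> bits n} | [forall C : pauli n, `|gg s O C - pi C| <= eps])
        \prod_(t < Nb m r) shot_prob rp rm pi (vv s t) (vv s t) (O t).
Proof.
have eL : \sum_(s < #|{: ST n m k r}|) wP n m r w s *
      \sum_(O : {ffun 'I_(Nb m r) -> bits n} | [forall C : pauli n, `|gg s O C - pi C| <= eps])
        \prod_(t < Nb m r) shot_prob rp rm pi (vv s t) (vv s t) (O t)
  = \sum_(s < #|{: ST n m k r}|) \sum_(O : {ffun 'I_(Nb m r) -> bits n})
      Pr s O * ([forall C : pauli n, `|gg s O C - pi C| <= eps])%:R.
  apply: eq_bigr => s _; rewrite big_mkcond mulr_sumr; apply: eq_bigr => O _.
  by rewrite /Pr; case: ifP => _; rewrite ?mulr1 ?mulr0.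
rewrite eL.
apply: (le_trans (y := \sum_(s < #|{: ST n m k r}|) \sum_(O : {ffun 'I_(Nb m r) -> bits n})
   Pr s O * (1 - \sum_(C : pauli n) (bad C s O)%:R))).
  under eq_bigr do under eq_bigr do rewrite mulrBr mulr1 mulr_sumr.
  under eq_bigr do rewrite sumrB.
  rewrite sumrB mass lerD2l lerN2.
  under eq_bigr do rewrite exchange_big.
  rewrite exchange_big /=.
  apply: (le_trans (y := \sum_(C : pauli n) ((4/3) ^+ r / 2 ^+ q))).
    by apply: ler_sum => C _; exact: bad_sum.
  rewrite sumr_const (_ : #|_| = 4 ^ n)%N ?mulr_natl //; by rewrite card_ffun !card_ord.
apply: ler_sum => s _; apply: ler_sum => O _; apply: ler_wpM2l; first exact: Pr_ge0.
have hs : forall (P : pred (pauli n)), 0 <= \sum_(C | P C) (bad C s O)%:R :> R.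
  by move=> P; apply: sumr_ge0 => C _; exact: ler0n.
case: (boolP [forall C, _]) => hg /=.
  have := hs predT; rewrite ?mulr1n; lra.
move/forallPn: hg => [C hC].
have bC : bad C s O.
  rewrite /bad leqNgt; apply/negP => hlt; move/negP: hC; apply.
  rewrite /gg ffunE; apply: sel_ok; last exact: hlt.
  by case: pid => p0 _; apply: addr_ge0 (p0 C) (ltW eps0).
rewrite (bigD1 C) //= bC; have := hs (fun C' => C' != C); rewrite /=; lra.
Qed.

End Main.

Lemma numeric (n : nat) : (0 < n)%N ->
  (4 ^ n)%:R * ((4/3 : R) ^+ (2 * (24 * n)) / 2 ^+ (24 * n)) <= 1/3.
Proof.
move=> n0.
rewrite exprM -expr_div_n (_ : (4/3 : R) ^+ 2 / 2 = 8/9); last by rewrite expr2; field.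
rewrite exprM natrX -exprMn.
have z4 : (8/9 : R) ^+ 4 <= 5/8 by rewrite !exprS expr0; lra.
have z24 : (8/9 : R) ^+ 24 <= 1/12.
  rewrite (_ : 24 = 4 * 6)%N // exprM.
  apply: (le_trans (y := (5/8 : R) ^+ 6)).
    by apply: lerXn2r; rewrite // ?nnegrE ?exprn_ge0 //; lra.
  by rewrite !exprS expr0; lra.
have zp : 0 <= (8/9 : R) ^+ 24 by apply: exprn_ge0; lra.
set x := 4%:R * _.
have x0 : 0 <= x by rewrite /x; apply: mulr_ge0 => //; lra.
have x1 : x <= 1/3 by rewrite /x; lra.
case: n n0 => // n _; rewrite exprS.
apply: (le_trans (y := x * 1)); last by rewrite mulr1.
by apply: ler_wpM2l => //; apply: exprn_ile1 => //; lra.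
Qed.

End S.

Theorem theorem3p4 :
  exists K : nat,
  forall (R : realType) (n m : nat) (eps rp rm : R),
    (0 < n)%N -> 0 < eps < 1 -> 0 <= rp <= 1 -> 0 <= rm <= 1 ->
    (exists (k : nat) (w : {ffun 'I_k -> R}) (est : 'I_k -> {ffun 'I_m -> bits n} -> R),
        @IR_alg_ok R n (1 - rp * rm) eps m k w est) ->
    exists (N k : nat) (w : {ffun 'I_k -> R}) (v u : 'I_k -> 'I_N -> 'I_n -> bloch)
           (g : 'I_k -> {ffun 'I_N -> bits n} -> {ffun pauli n -> R}),
      (N%:R <= K%:R * n%:R * (1 + ln (n%:R / eps)) * m%:R :> R) /\
      @pauli_alg_ok R n rp rm eps N k w v u g.
Proof.
exists 48%N => R n m eps rp rm n0 /andP [e0 e1] rpb rmb [k [w [est [wd IRok]]]].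
pose q := (24 * n)%N.
exists (Nb m (2 * q)), #|{: ST n m k (2 * q)}|, (wP n m (2 * q) w),
  (fun s t => vv R s t), (fun s t => vv R s t), (@gg R n m k q est).
split.
  have hL : 1 <= 1 + ln (n%:R / eps) :> R.
    rewrite lerDl; apply: ln_ge0; rewrite ler_pdivlMr // mul1r.
    apply: (le_trans (ltW e1)); by rewrite ler1n.
  rewrite /Nb card_prod !card_ord.
  rewrite (_ : ((2 * q) * m)%N = (48 * n * m)%N); last by rewrite /q; lia.
  rewrite !natrM; apply: ler_wpM2r => //.
  rewrite -[X in X <= _]mulr1; apply: ler_wpM2l => //.
split; first exact: wP_dist.
split.
  by move=> s t j; rewrite /vv /Ev; split; apply: E_unit.
move=> pi pid.
apply: (le_trans _ (main_bound q wd IRok pid e0 rpb rmb)).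
have hn := @numeric R n n0; rewrite -/q in hn; lra.
Qed.
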